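(* Let $a,b,c,d\ge0$ with $a+b+c+d=1$, and let $$C=\begin{pmatrix}a&b&c&d\\ d&a&b&c\\ c&d&a&b\\ b&c&d&a\end{pmatrix}.$$ If $C$ is bracelet, then $C$ is unistochastic.
   Context: A bistochastic $N\times N$ matrix $B$ (nonnegative entries, all row and column sums equal to 1) is bracelet if for all $k,l\in\{1,\dots,N\}$ both $2\max_j\sqrt{B_{lj}B_{kj}}\le\sum_{j=1}^N\sqrt{B_{lj}B_{kj}}$ and $2\max_j\sqrt{B_{jk}B_{jl}}\le\sum_{j=1}^N\sqrt{B_{jk}B_{jl}}$. It is unistochastic if there is a unitary $U$ with $B_{ij}=|U_{ij}|^2$ for all $i,j$. *)

(* Defs.v *)
From HB Require Import structures.
From mathcomp Require Import all_boot all_order all_algebra.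
From mathcomp Require Import complex.
From mathcomp Require Import Rstruct.
From Stdlib Require Import Reals.
Set Implicit Arguments. Unset Strict Implicit. Unset Printing Implicit Defensive.
Import Order.TTheory GRing.Theory Num.Theory.
Local Open Scope ring_scope.

Definition bistochastic (N : nat) (B : 'M[R]_N) : Prop :=
  (forall i j, 0 <= B i j) /\
  (forall i, \sum_(j < N) B i j = 1) /\
  (forall j, \sum_(i < N) B i j = 1).

Definition bracelet (N : nat) (B : 'M[R]_N) : Prop :=
  bistochastic B /\
  forall k l : 'I_N,
    2 * \big[Num.max/0]_(j < N) Num.sqrt (B l j * B k j)
      <= \sum_(j < N) Num.sqrt (B l j * B k j) /\
    2 * \big[Num.max/0]_(j < N) Num.sqrt (B j k * B j l)
      <= \sum_(j < N) Num.sqrt (B j k * B j l).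

Definition sqmod (z : R[i]) : R := let: Complex x y := z in x ^+ 2 + y ^+ 2.

Definition unitary (N : nat) (U : 'M[R[i]]_N) : Prop :=
  U *m (map_mx conjc U)^T = 1%:M.

Definition unistochastic (N : nat) (B : 'M[R]_N) : Prop :=
  exists U : 'M[R[i]]_N, unitary U /\ forall i j, B i j = sqmod (U i j).

Definition circ4 (a b c d : R) : 'M[R]_4 :=
  \matrix_(i < 4, j < 4) nth 0 [:: a; b; c; d] (modn (subn (addn (val j) 4) (val i)) 4).

(* Main.v *)
Require Import Defs.
From mathcomp Require Import all_boot all_order all_algebra.
From mathcomp Require Import complex Rstruct.
From Stdlib Require Import Reals.
From mathcomp Require Import ring lra.
Import Order.TTheory GRing.Theory Num.Theory.
Local Open Scope ring_scope.
Definition zs (x0 y0 x1 y1 x2 y2 x3 y3 : R) : seq R[i] :=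
  [:: Complex x0 y0; Complex x1 y1; Complex x2 y2; Complex x3 y3].

Definition cU (s : seq R[i]) : 'M[R[i]]_4 :=
  \matrix_(i < 4, j < 4) nth 0 s (modn (subn (addn (val j) 4) (val i)) 4).

Lemma circ_unitary (x0 y0 x1 y1 x2 y2 x3 y3 : R) :
  x0^+2 + y0^+2 + x1^+2 + y1^+2 + x2^+2 + y2^+2 + x3^+2 + y3^+2 = 1 ->
  x1*x0 + y1*y0 + x2*x1 + y2*y1 + x3*x2 + y3*y2 + x0*x3 + y0*y3 = 0 ->
  y1*x0 - x1*y0 + y2*x1 - x2*y1 + y3*x2 - x3*y2 + y0*x3 - x0*y3 = 0 ->
  x2*x0 + y2*y0 + x3*x1 + y3*y1 = 0 ->
  unitary (cU (zs x0 y0 x1 y1 x2 y2 x3 y3)).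
Proof.
move=> H0 H1 H2 H3.
apply/matrixP => i k; rewrite !mxE.
rewrite !big_ord_recr big_ord0 /= !mxE.
case: i => [[|[|[|[|i]]]] Hi] //; case: k => [[|[|[|[|k]]]] Hk] //=.
all: apply/eqP; rewrite eq_complex /=; apply/andP; split; apply/eqP.
all: try lra.
Qed.

Lemma S2 (A B E : R) : 0 <= A -> 0 <= B -> E ^+ 2 <= A * B ->
  exists M H J : R, M^+2 + H^+2 = A /\ M^+2 + J^+2 = B /\ H * J = - E.
Proof.
move=> hA hB hE.
set D := Num.sqrt ((A - B)^+2 + 4 * E^+2).
have hD0 : 0 <= D by apply: sqrtr_ge0.
have hD2 : D^+2 = (A - B)^+2 + 4 * E^+2.
  by rewrite sqr_sqrtr // addr_ge0 ?sqr_ge0 // mulr_ge0 ?sqr_ge0.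
have hD3 : D^+2 <= (A+B)^+2 by rewrite hD2; nra.
have hD4 : (A-B)^+2 <= D^+2 by rewrite hD2; nra.
have hDle : D <= A + B by nra.
have hDge1 : A - B <= D by nra.
have hDge2 : B - A <= D by nra.
set m := (A + B - D) / 2.
have hm : 0 <= m by rewrite /m; lra.
have hAm : 0 <= A - m by rewrite /m; lra.
have hBm : 0 <= B - m by rewrite /m; lra.
have hprod : (A - m) * (B - m) = E^+2.
  rewrite /m; have: (A - (A + B - D) / 2) * (B - (A + B - D) / 2) = (D^+2 - (A-B)^+2)/4 by field.
  by move=> ->; rewrite hD2; field.
set M := Num.sqrt m; set H := Num.sqrt (A - m); set J0 := Num.sqrt (B - m).
have hM : M^+2 = m by rewrite sqr_sqrtr.
have hH : H^+2 = A - m by rewrite sqr_sqrtr.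
have hJ : J0^+2 = B - m by rewrite sqr_sqrtr.
have hH0 : 0 <= H by apply: sqrtr_ge0.
have hJ0 : 0 <= J0 by apply: sqrtr_ge0.
have hHJ : (H * J0)^+2 = E^+2 by rewrite exprMn hH hJ.
have hHJ0 : 0 <= H * J0 by apply: mulr_ge0.
have habs : H * J0 = `|E|.
  apply/eqP; rewrite -(@eqrXn2 _ 2) // ?normr_ge0 //.
  by rewrite hHJ real_normK // num_real.
case: (lerP 0 E) => hEs.
- exists M, H, (- J0); split; first by rewrite hM; lra.
  split; first by rewrite sqrrN hM; lra.
  by rewrite mulrN habs ger0_norm.
- exists M, H, J0; split; first by rewrite hM; lra.
  split; first by rewrite hM; lra.
  by rewrite habs ltr0_norm.
Qed.

Lemma S3 (a c M H : R) : 0 <= a -> 0 <= c -> M^+2 + H^+2 = a * c ->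
  exists x0 y0 x2 y2 : R, x0^+2 + y0^+2 = a /\ x2^+2 + y2^+2 = c /\
     x2*x0 + y2*y0 = M /\ y2*x0 - x2*y0 = H.
Proof.
move=> ha hc hMH.
case: (lerP a 0) => ha0.
- have a0 : a = 0 by lra.
  have hM0 : M = 0 by move: hMH; rewrite a0 mul0r; nra.
  have hH0 : H = 0 by move: hMH; rewrite a0 mul0r; nra.
  exists 0, 0, (Num.sqrt c), 0; rewrite a0 hM0 hH0 sqr_sqrtr //.
  split; first by ring. split; first by ring. split; ring.
- set p := Num.sqrt a.
  have hp : p^+2 = a by rewrite sqr_sqrtr.
  have hp0 : 0 < p by rewrite sqrtr_gt0.
  exists p, 0, (M / p), (H / p).
  split; first by rewrite hp; ring.
  split.
    have -> : (M / p)^+2 + (H / p)^+2 = (M^+2 + H^+2) / p^+2 by field; lra.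
    by rewrite hMH hp; field; lra.
  split; field; lra.
Qed.

Lemma normw (u1 u2 : R) : u1^+2 + u2^+2 != 0 ->
  exists t, (t*u1)^+2 + (t*u2)^+2 = 1.
Proof.
move=> hu.
have hpos : 0 < u1^+2 + u2^+2 by rewrite lt0r hu /=; nra.
exists (Num.sqrt (u1^+2 + u2^+2))^-1.
have -> : ((Num.sqrt (u1 ^+ 2 + u2 ^+ 2))^-1 * u1) ^+ 2 + ((Num.sqrt (u1 ^+ 2 + u2 ^+ 2))^-1 * u2) ^+ 2
  = (u1^+2 + u2^+2) / (Num.sqrt (u1 ^+ 2 + u2 ^+ 2))^+2.
  have hs : Num.sqrt (u1 ^+ 2 + u2 ^+ 2) != 0 by rewrite gt_eqF // sqrtr_gt0.
  by field.
rewrite sqr_sqrtr; last lra.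
by rewrite divff // gt_eqF.
Qed.

Lemma S4 (X1 X2 Y1 Y2 : R) : X1^+2 + X2^+2 = Y1^+2 + Y2^+2 ->
  exists w1 w2 : R, w1^+2 + w2^+2 = 1 /\
    w1*X1 - w2*X2 + w1*Y1 + w2*Y2 = 0 /\ w1*X2 + w2*X1 + w1*Y2 - w2*Y1 = 0.
Proof.
move=> hXY.
have [hu|hu] := eqVneq ((X1 - Y1)^+2 + (-X2 - Y2)^+2) 0.
- have [hv|hv] := eqVneq ((X2 - Y2)^+2 + (X1 + Y1)^+2) 0.
  + have e1 : X1 = 0 by nra.
    have e2 : X2 = 0 by nra.
    have e3 : Y1 = 0 by nra.
    have e4 : Y2 = 0 by nra.
    exists 1, 0; rewrite e1 e2 e3 e4; split; [ring|split; ring].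
  + have [t ht] := @normw _ _ hv.
    exists (t * (X2 - Y2)), (t * (X1 + Y1)); split => //.
    split.
      have -> : t * (X2 - Y2) * X1 - t * (X1 + Y1) * X2 + t * (X2 - Y2) * Y1 + t * (X1 + Y1) * Y2 = 0 by ring.
      done.
    have -> : t * (X2 - Y2) * X2 + t * (X1 + Y1) * X1 + t * (X2 - Y2) * Y2 - t * (X1 + Y1) * Y1
      = t * ((X1^+2 + X2^+2) - (Y1^+2 + Y2^+2)) by ring.
    by rewrite hXY subrr mulr0.
- have [t ht] := @normw _ _ hu.
  exists (t * (X1 - Y1)), (t * (-X2 - Y2)); split => //.
  split.
    have -> : t * (X1 - Y1) * X1 - t * (- X2 - Y2) * X2 + t * (X1 - Y1) * Y1 + t * (- X2 - Y2) * Y2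
      = t * ((X1^+2 + X2^+2) - (Y1^+2 + Y2^+2)) by ring.
    by rewrite hXY subrr mulr0.
  have -> : t * (X1 - Y1) * X2 + t * (- X2 - Y2) * X1 + t * (X1 - Y1) * Y2 - t * (- X2 - Y2) * Y1 = 0 by ring.
  done.
Qed.

Lemma L2 (f : 'I_4 -> R) (S : R) : 2 * \big[Num.max/0]_(j < 4) f j <= S ->
  forall j, 2 * f j <= S.
Proof.
move=> H j; apply: le_trans H; rewrite ler_pM2l //.
exact: le_bigmax.
Qed.

Lemma poly_key (p q r s : R) : 0 <= p -> 0 <= q -> 0 <= r -> 0 <= s ->
  2 * (s * p) <= 0 + s * p + p * q + q * r + r * s ->
  2 * (p * q) <= 0 + s * p + p * q + q * r + r * s ->
  2 * (q * r) <= 0 + s * p + p * q + q * r + r * s ->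
  2 * (r * s) <= 0 + s * p + p * q + q * r + r * s ->
  (((p^+2 - r^+2) * (q^+2 - s^+2)) / 4)^+2 <= (p^+2 * r^+2) * (q^+2 * s^+2).
Proof.
move=> hp hq hr hs G0 G1 G2 G3.
have e1 : (p^+2 - r^+2) * (q^+2 - s^+2) + 4 * (p * q * r * s) = (p * q + r * s)^+2 - (q * r - p * s)^+2 by ring.
have e2 : 4 * (p * q * r * s) - (p^+2 - r^+2) * (q^+2 - s^+2) = (q * r + p * s)^+2 - (p * q - r * s)^+2 by ring.
have f1 : 0 <= (p * q + r * s)^+2 - (q * r - p * s)^+2.
  rewrite subr_ge0 -[X in X <= _]real_normK ?num_real // -[X in _ <= X]real_normK ?num_real //.
  rewrite lerXn2r ?nnegrE ?normr_ge0 //.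
  rewrite [X in _ <= X]ger0_norm; last by nra.
  by rewrite ler_norml; apply/andP; split; lra.
have f2 : 0 <= (q * r + p * s)^+2 - (p * q - r * s)^+2.
  rewrite subr_ge0 -[X in X <= _]real_normK ?num_real // -[X in _ <= X]real_normK ?num_real //.
  rewrite lerXn2r ?nnegrE ?normr_ge0 //.
  rewrite [X in _ <= X]ger0_norm; last by nra.
  by rewrite ler_norml; apply/andP; split; lra.
rewrite -e1 in f1; rewrite -e2 in f2.
have := mulr_ge0 f1 f2.
set X := (p^+2 - r^+2) * (q^+2 - s^+2).
move=> h.
have -> : (X / 4)^+2 = X^+2 / 16 by field.
have -> : p ^+ 2 * r ^+ 2 * (q ^+ 2 * s ^+ 2) = (p * q * r * s)^+2 by ring.
nra.
Qed.

Lemma brac_key (a b c d : R) :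
  0 <= a -> 0 <= b -> 0 <= c -> 0 <= d ->
  bracelet (circ4 a b c d) -> ((a - c) * (b - d) / 4)^+2 <= (a * c) * (b * d).
Proof.
move=> ha hb hc hd [_ Hb].
have [H _] := Hb (0 : 'I_4) 1.
have G := @L2 _ _ H.
have G0 := G 0; have G1 := G 1; have G2 := G 2; have G3 := G 3.
move: G0 G1 G2 G3; rewrite !big_ord_recr big_ord0 !mxE /= !sqrtrM //.
have ea : a = (Num.sqrt a)^+2 by rewrite sqr_sqrtr.
have eb : b = (Num.sqrt b)^+2 by rewrite sqr_sqrtr.
have ec : c = (Num.sqrt c)^+2 by rewrite sqr_sqrtr.
have ed : d = (Num.sqrt d)^+2 by rewrite sqr_sqrtr.
move=> G0 G1 G2 G3.
rewrite {1 2}ea {1 2}eb {1 2}ec {1 2}ed.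
apply: poly_key => //; apply: sqrtr_ge0.
Qed.

Theorem mainTheorem7 (a b c d : R) :
  0 <= a -> 0 <= b -> 0 <= c -> 0 <= d -> a + b + c + d = 1 ->
  bracelet (circ4 a b c d) -> unistochastic (circ4 a b c d).
Proof.
move=> ha hb hc hd hsum hbr.
have key := @brac_key _ _ _ _ ha hb hc hd hbr.
have [M [H [J [hMH [hMJ hHJ]]]]] := @S2 _ _ _ (mulr_ge0 ha hc) (mulr_ge0 hb hd) key.
have [x0 [y0 [x2 [y2 [m0 [m2 [h1 h2]]]]]]] := @S3 _ _ _ _ ha hc hMH.
have hMJ' : (- M)^+2 + J^+2 = b * d by rewrite sqrrN.
have [v1 [t1 [v3 [t3 [m1 [m3 [k1 k2]]]]]]] := @S3 _ _ _ _ hb hd hMJ'.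
set X1 := v1 * x0 + t1 * y0 + v3 * x2 + t3 * y2.
set X2 := t1 * x0 - v1 * y0 + t3 * x2 - v3 * y2.
set Y1 := x2 * v1 + y2 * t1 + x0 * v3 + y0 * t3.
set Y2 := y2 * v1 - x2 * t1 + y0 * v3 - x0 * t3.
have hXY : X1^+2 + X2^+2 = Y1^+2 + Y2^+2.
  have e : X1^+2 + X2^+2 - (Y1^+2 + Y2^+2) =
    (x0^+2 + y0^+2) * (v1^+2 + t1^+2) + (x2^+2 + y2^+2) * (v3^+2 + t3^+2)
    - (x2^+2 + y2^+2) * (v1^+2 + t1^+2) - (x0^+2 + y0^+2) * (v3^+2 + t3^+2)
    + 4 * ((y2 * x0 - x2 * y0) * (t3 * v1 - v3 * t1)) by rewrite /X1 /X2 /Y1 /Y2; ring.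
  rewrite m0 m1 m2 m3 h2 k2 hHJ in e.
  by apply/eqP; rewrite -subr_eq0 e; apply/eqP; field.
have [w1 [w2 [hw [q1 q2]]]] := @S4 _ _ _ _ hXY.
pose z1x := w1 * v1 - w2 * t1. pose z1y := w1 * t1 + w2 * v1.
pose z3x := w1 * v3 - w2 * t3. pose z3y := w1 * t3 + w2 * v3.
exists (cU (zs x0 y0 z1x z1y x2 y2 z3x z3y)).
split.
  apply: circ_unitary; rewrite /z1x /z1y /z3x /z3y.
  - have -> : x0 ^+ 2 + y0 ^+ 2 + (w1 * v1 - w2 * t1) ^+ 2 + (w1 * t1 + w2 * v1) ^+ 2 +
      x2 ^+ 2 + y2 ^+ 2 + (w1 * v3 - w2 * t3) ^+ 2 + (w1 * t3 + w2 * v3) ^+ 2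
      = (x0^+2 + y0^+2) + (w1^+2 + w2^+2) * (v1^+2 + t1^+2) + (x2^+2 + y2^+2)
        + (w1^+2 + w2^+2) * (v3^+2 + t3^+2) by ring.
    rewrite m0 m1 m2 m3 hw; lra.
  - apply: (etrans _ q1); rewrite /X1 /X2 /Y1 /Y2; ring.
  - apply: (etrans _ q2); rewrite /X1 /X2 /Y1 /Y2; ring.
  - have -> : x2 * x0 + y2 * y0 + (w1 * v3 - w2 * t3) * (w1 * v1 - w2 * t1) +
      (w1 * t3 + w2 * v3) * (w1 * t1 + w2 * v1)
      = (x2 * x0 + y2 * y0) + (w1^+2 + w2^+2) * (v3 * v1 + t3 * t1) by ring.
    by rewrite h1 hw k1; ring.
have E1 : z1x^+2 + z1y^+2 = (w1^+2 + w2^+2) * b by rewrite -m1 /z1x /z1y; ring.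
have E3 : z3x^+2 + z3y^+2 = (w1^+2 + w2^+2) * d by rewrite -m3 /z3x /z3y; ring.
rewrite hw mul1r in E1; rewrite hw mul1r in E3.
move=> i j; rewrite /cU /circ4 !mxE.
move: (ltn_pmod (subn (addn (val j) 4) (val i)) (ltn0Sn 3)).
case: (modn (subn (addn (val j) 4) (val i)) 4) => [|[|[|[|n]]]] //= _.
Qed.
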